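(* Let $A$ be an abelian group and $(A_i)_{i\in I}$ a family of subgroups such that the lattice of subgroups generated by the $A_i$ (under $+$ and $\cap$) is distributive. Let $B$ be one of the $A_i$ and $n$ a positive integer. If $$H^n\big((B\cap A_i)_{i\in I},A\big)=0\quad\text{and}\quad H^n\Big(\big((B+A_i)/B\big)_{i\in I},A/B\Big)=0,$$ then $H^n\big((A_i)_{i\in I},A\big)=0$.
   Context: For an abelian group $M$ and a family $(M_i)_{i\in I}$ of subgroups, $H^n((M_i),M)$ denotes the $n$-th cohomology of the cochain complex $C^n=\prod_{i_0,\dots,i_n\in I}M/(M_{i_0}+\cdots+M_{i_n})$ with differential $(df)(i_0,\dots,i_n)=\sum_{j=0}^n(-1)^j f(i_0,\dots,\widehat{i_j},\dots,i_n)\bmod M_{i_0}+\cdots+M_{i_n}$. A lattice is distributive if one (equivalently, each) of its operations distributes over the other. *)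

(* Defs.v *)
From mathcomp Require Import all_boot all_order all_algebra.
Set Implicit Arguments. Unset Strict Implicit. Unset Printing Implicit Defensive.
Import GRing.Theory.
Local Open Scope ring_scope.

Section Defs.
Variable G : zmodType.

Definition is_subgroup (S : G -> Prop) : Prop :=
  S 0 /\ forall x y, S x -> S y -> S (x - y).

Definition sub_add (S T : G -> Prop) : G -> Prop :=
  fun z => exists x y, S x /\ T y /\ z = x + y.
Definition sub_cap (S T : G -> Prop) : G -> Prop := fun z => S z /\ T z.

Variable I : Type.

Inductive gen_lattice (M : I -> G -> Prop) : (G -> Prop) -> Prop :=
  | gl_base i : gen_lattice M (M i)
  | gl_add S T : gen_lattice M S -> gen_lattice M T -> gen_lattice M (sub_add S T)
  | gl_cap S T : gen_lattice M S -> gen_lattice M T -> gen_lattice M (sub_cap S T).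

Definition distributive_family (M : I -> G -> Prop) : Prop :=
  forall S T U, gen_lattice M S -> gen_lattice M T -> gen_lattice M U ->
    forall x, sub_cap S (sub_add T U) x <-> sub_add (sub_cap S T) (sub_cap S U) x.

Definition sumsub (M : I -> G -> Prop) (m : nat) (i : 'I_m -> I) : G -> Prop :=
  fun z => exists x : 'I_m -> G, (forall j, M (i j) (x j)) /\ z = \sum_(j < m) x j.

(* Cochains of degree m-1 are represented by lifts
   f : ('I_m -> I) -> G of elements of prod_i G/(M_{i_0}+...+M_{i_{m-1}}).
   Differential (on representatives): *)
Definition cobound (m : nat) (f : ('I_m -> I) -> G) : ('I_m.+1 -> I) -> G :=
  fun i => \sum_(j < m.+1) (f (i \o lift j)) *~ ((-1) ^+ j).

Definition Hn_vanishes (M : I -> G -> Prop) (n : nat) : Prop :=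
  forall f : ('I_n.+1 -> I) -> G,
    (forall i : 'I_n.+2 -> I, sumsub M i (cobound f i)) ->
    exists g : ('I_n -> I) -> G,
      forall i : 'I_n.+1 -> I, sumsub M i (f i - cobound g i).

End Defs.

(* Main.v *)
Require Import Defs.
From mathcomp Require Import all_boot all_order all_algebra.
From mathcomp Require Import ring zify.
From Stdlib Require Import FunctionalExtensionality ClassicalEpsilon.
Import GRing.Theory.
Local Open Scope ring_scope.
Set Implicit Arguments. Unset Strict Implicit.

Definition sgm (m : nat) (p : 'I_m.+2 * 'I_m.+1) : 'I_m.+2 * 'I_m.+1 :=
  if (p.2 < p.1)%N then (inord p.2, inord p.1.-1) else (inord p.2.+1, inord p.1).
Arguments sgm {m}.

Lemma sgm_val {m} (p : 'I_m.+2 * 'I_m.+1) :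
  (((sgm p).1 : nat) = if (p.2 < p.1)%N then (p.2 : nat) else (p.2 : nat).+1) /\
  (((sgm p).2 : nat) = if (p.2 < p.1)%N then (p.1 : nat).-1 else (p.1 : nat)).
Proof.
case: p => j l; rewrite /sgm /=; have := ltn_ord j; have := ltn_ord l.
move=> h1 h2; case: (ltnP l j) => h /=; rewrite !inordK //; lia.
Qed.

Lemma sgmK m : involutive (@sgm m).
Proof.
case=> j l; have [a1 a2] := sgm_val (sgm (j, l)).
have [b1 b2] := sgm_val (j, l); move: a1 a2 b1 b2 => /=.
set q := sgm (j, l); case: (sgm q) => x y /=; case: q => u v /= a1 a2 b1 b2.
have [e1 e2] : nat_of_ord x = j /\ nat_of_ord y = l.
  move: a1 a2; rewrite b1 b2; case: (ltnP l j) => h /=.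
    by case: ifP => h2 -> ->; lia.
  by case: ifP => h2 -> ->; lia.
by congr pair; apply: val_inj.
Qed.

Lemma bumpC (l j x : nat) : (l < j)%N -> bump l (bump j.-1 x) = bump j (bump l x).
Proof. rewrite /bump => h; do ! case: leqP => ? /=; lia. Qed.

Lemma cobound2 (G : zmodType) (I : Type) m (g : ('I_m -> I) -> G) (i : 'I_m.+2 -> I) :
  cobound (cobound g) i = 0.
Proof.
rewrite /cobound.
pose F (p : 'I_m.+2 * 'I_m.+1) :=
  g (fun x => i (lift p.1 (lift p.2 x))) *~ ((-1) ^+ p.1 * (-1) ^+ p.2).
have -> : \sum_(j < m.+2) (\sum_(l < m.+1) g ((i \o lift j) \o lift l) *~ (-1) ^+ l) *~ (-1) ^+ j
   = \sum_p F p.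
  rewrite -(pair_bigA _ (fun j l => F (j, l))).
  apply: eq_bigr => j _; rewrite mulrz_suml; apply: eq_bigr => l _.
  by rewrite /F /= mulrzA_C.
rewrite (bigID (fun p : 'I_m.+2 * 'I_m.+1 => (p.2 < p.1)%N)) /=.
rewrite [X in _ + X](reindex_inj (can_inj (@sgmK m))) /=.
have HP (p : 'I_m.+2 * 'I_m.+1) : ((sgm p).2 < (sgm p).1)%N = ~~ (p.2 < p.1)%N.
  have [-> ->] := sgm_val p; case: ifP => h; apply/idP/idP; lia.
under [X in _ + X]eq_bigl => p do rewrite HP negbK.
rewrite -big_split /=; apply: big1 => -[j l] /= hlj.
have hl : (l < m.+2)%N by rewrite ltnW // ltnS ltn_ord.
have hj : (j.-1 < m.+1)%N by have := ltn_ord j; lia.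
rewrite /F /sgm /= hlj /= !inordK //.
have -> : (fun x => i (lift (inord l) (lift (inord j.-1) x))) = (fun x : 'I_m => i (lift j (lift l x))).
  apply: functional_extensionality => x; congr i.
  apply: val_inj; rewrite /= !inordK //; exact: bumpC.
have hj0 : (0 < j)%N by lia.
rewrite -mulrzDr.
have -> : (-1)^+j * (-1)^+l + (-1)^+l * (-1)^+j.-1 = 0 :> int.
  by rewrite -{1}(prednK hj0) exprS; ring.
by rewrite mulr0z.
Qed.


Lemma sg0 (G : zmodType) (S : G -> Prop) : is_subgroup S -> S 0.
Proof. by case. Qed.
Lemma sgB (G : zmodType) (S : G -> Prop) x y : is_subgroup S -> S x -> S y -> S (x - y).
Proof. by case=> _ h; apply: h. Qed.
Lemma sgN (G : zmodType) (S : G -> Prop) x : is_subgroup S -> S x -> S (- x).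
Proof. by move=> hS hx; rewrite -sub0r; apply: sgB => //; apply: sg0. Qed.
Lemma sgD (G : zmodType) (S : G -> Prop) x y : is_subgroup S -> S x -> S y -> S (x + y).
Proof. by move=> hS hx hy; rewrite -[y]opprK; apply: sgB => //; apply: sgN. Qed.
Lemma sgsum (G : zmodType) (S : G -> Prop) m (F : 'I_m -> G) :
  is_subgroup S -> (forall j, S (F j)) -> S (\sum_(j < m) F j).
Proof.
move=> hS hF; apply: (big_ind S); [exact: sg0 | | by move=> j _; apply: hF].
by move=> x y; apply: sgD.
Qed.
Lemma sgMz (G : zmodType) (S : G -> Prop) x (z : int) : is_subgroup S -> S x -> S (x *~ z).
Proof.
move=> hS hx.
have hn n : S (x *+ n) by elim: n => [|n IH]; [rewrite mulr0n; exact: sg0 | rewrite mulrS; exact: sgD].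
case: z => n; first by rewrite -pmulrn.
by rewrite NegzE mulrNz -pmulrn; apply: sgN.
Qed.

Lemma sumsub_sg (G : zmodType) (I : Type) (M : I -> G -> Prop) m (i : 'I_m -> I) :
  (forall i, is_subgroup (M i)) -> is_subgroup (sumsub M i).
Proof.
move=> hM; split.
  exists (fun _ => 0); split; first by move=> j; apply: sg0.
  by rewrite big1.
move=> x y [a [ha ->]] [b [hb ->]]; exists (fun j => a j - b j); split.
  by move=> j; apply: sgB.
by rewrite sumrB.
Qed.

Lemma sumsub_mono (G : zmodType) (I : Type) (M M' : I -> G -> Prop) m (i : 'I_m -> I) x :
  (forall i x, M i x -> M' i x) -> sumsub M i x -> sumsub M' i x.
Proof. by move=> h [a [ha ->]]; exists a; split => // j; apply: h. Qed.

Lemma sumsub_lift (G : zmodType) (I : Type) (M : I -> G -> Prop) m (i : 'I_m.+1 -> I) j x :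
  (forall i, M i 0) -> sumsub M (i \o lift j) x -> sumsub M i x.
Proof.
move=> h0 [a [ha ->]]; exists (fun k => oapp a 0 (unlift j k)); split.
  by move=> k; case: unliftP => [k' ->|->] /=; [apply: ha | apply: h0].
rewrite (bigD1_ord j) //= unlift_none add0r.
by apply: eq_bigr => k _; rewrite liftK.
Qed.

Lemma sumsub_cons (G : zmodType) (I : Type) (M : I -> G -> Prop) m (i : 'I_m.+1 -> I) x :
  (forall i, M i 0) ->
  (sumsub M i x <-> exists a t, M (i ord0) a /\ sumsub M (i \o lift ord0) t /\ x = a + t).
Proof.
move=> h0; split.
  move=> [a [ha ->]]; exists (a ord0), (\sum_(k < m) a (lift ord0 k)); split => //.
  split; last by rewrite big_ord_recl.
  by exists (fun k => a (lift ord0 k)); split => // k; apply: ha.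
move=> [a [t [ha [[b [hb ->]] ->]]]].
exists (fun k => oapp b a (unlift ord0 k)); split.
  by move=> k; case: unliftP => [k' ->|->] /=; [apply: hb | ].
by rewrite big_ord_recl /= unlift_none /=; congr (_ + _); apply: eq_bigr => k _; rewrite liftK.
Qed.

Lemma sumsub_lat (G : zmodType) (I : Type) (M : I -> G -> Prop) m (i : 'I_m.+1 -> I) :
  (forall i, is_subgroup (M i)) ->
  exists T, gen_lattice M T /\ forall x, T x <-> sumsub M i x.
Proof.
move=> hM; have h0 i0 : M i0 0 by apply: sg0.
elim: m i => [|m IH] i.
  exists (M (i ord0)); split; first exact: gl_base.
  move=> x; split.
    by move=> hx; exists (fun _ => x); split; [case=> -[]// p; rewrite (_ : Ordinal p = ord0) //; apply: val_inj| rewrite big_ord1].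
  by move=> [a [ha ->]]; rewrite big_ord1.
have [T [hT hTx]] := IH (i \o lift ord0).
exists (sub_add (M (i ord0)) T); split; first by apply: gl_add => //; apply: gl_base.
move=> x; rewrite sumsub_cons //; split.
  by move=> [a [t [ha [ht ->]]]]; exists a, t; rewrite -hTx.
by move=> [a [t [ha [ht ->]]]]; exists a, t; rewrite hTx.
Qed.

Lemma sumsub_distr (G : zmodType) (I : Type) (M : I -> G -> Prop) k m (i : 'I_m.+1 -> I) x :
  (forall i, is_subgroup (M i)) -> distributive_family M ->
  M k x -> sumsub M i x -> sumsub (fun j => sub_cap (M k) (M j)) i x.
Proof.
move=> hM hD; have h0 i0 : M i0 0 by apply: sg0.
have h0' i0 : sub_cap (M k) (M i0) 0 by split.
elim: m i x => [|m IH] i x.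
  move=> hk [a [ha hx]]; subst x; exists a; split => //.
  case=> -[]// p; rewrite (_ : Ordinal p = ord0); last by apply: val_inj.
  by split => //; move: hk; rewrite big_ord1.
move=> hk; rewrite sumsub_cons // => -[a [t [ha [ht hx]]]]; subst x.
have [T [hT hTx]] := sumsub_lat (i \o lift ord0) hM.
have := (hD (M k) (M (i ord0)) T (gl_base _ _) (gl_base _ _) hT (a + t)).1.
case.
  by split => //; exists a, t; rewrite hTx.
move=> a' [t' [[ha1 ha2] [[ht1 ht2] ->]]].
rewrite sumsub_cons //; exists a', t'; split => //; split => //.
by apply: IH => //; rewrite -hTx.
Qed.

Lemma cobound_sub (G : zmodType) (I : Type) m (f1 f2 : ('I_m -> I) -> G) i :
  cobound (fun c => f1 c - f2 c) i = cobound f1 i - cobound f2 i.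
Proof. by rewrite /cobound -sumrB; apply: eq_bigr => j _; rewrite mulrzBl. Qed.

Lemma cobound_add (G : zmodType) (I : Type) m (f1 f2 : ('I_m -> I) -> G) i :
  cobound (fun c => f1 c + f2 c) i = cobound f1 i + cobound f2 i.
Proof. by rewrite /cobound -big_split; apply: eq_bigr => j _; rewrite mulrzDl. Qed.

Lemma cobound_sg (G : zmodType) (I : Type) (S : G -> Prop) m (h : ('I_m -> I) -> G) i :
  is_subgroup S -> (forall c, S (h c)) -> S (cobound h i).
Proof. by move=> hS hh; apply: sgsum => // j; apply: sgMz. Qed.

Lemma cobound_sumsub (G : zmodType) (I : Type) (M : I -> G -> Prop) m (s : ('I_m -> I) -> G) i :
  (forall i, is_subgroup (M i)) -> (forall c, sumsub M c (s c)) -> sumsub M i (cobound s i).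
Proof.
move=> hM hs; apply: sgsum; first exact: sumsub_sg.
move=> j; apply: sgMz; first exact: sumsub_sg.
by apply: (sumsub_lift (j := j)) => [i0|]; [apply: sg0 | apply: hs].
Qed.

Lemma fchoice (T : Type) m (P : 'I_m -> T -> Prop) :
  (forall j, exists x, P j x) -> exists F : 'I_m -> T, forall j, P j (F j).
Proof.
move=> h; exists (fun j => proj1_sig (constructive_indefinite_description _ (h j))).
by move=> j; case: constructive_indefinite_description.
Qed.

Unset Implicit Arguments.
Set Strict Implicit.

Theorem mainTheorem11 (A : zmodType) (I : Type) (Ai : I -> A -> Prop)
  (k : I) (n : nat)
  (Q : zmodType) (pi : A -> Q) :
  (forall i, is_subgroup (Ai i)) ->
  distributive_family Ai ->
  (0 < n)%N ->
  (* (Q, pi) is the quotient A/B, where B = Ai k *)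
  (forall x y, pi (x - y) = pi x - pi y) ->
  (forall q, exists x, pi x = q) ->
  (forall x, pi x = 0 <-> Ai k x) ->
  Hn_vanishes (fun i => sub_cap (Ai k) (Ai i)) n ->
  Hn_vanishes (fun i q => exists x, sub_add (Ai k) (Ai i) x /\ pi x = q) n ->
  Hn_vanishes Ai n.
Proof.
move=> hsg hD _ hpi hsurj hker H1 H2 f hf.
have pi0 : pi 0 = 0 by have := hpi 0 0; rewrite !subrr.
have piN x : pi (- x) = - pi x by rewrite -sub0r hpi pi0 sub0r.
have piD x y : pi (x + y) = pi x + pi y by rewrite -{1}[y]opprK hpi piN opprK.
have pisum m (F : 'I_m -> A) : pi (\sum_(j < m) F j) = \sum_(j < m) pi (F j).
  elim/big_rec2: _ => [|j y1 y2 _ <-]; [exact: pi0 | exact: piD].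
have piMz x (z : int) : pi (x *~ z) = pi x *~ z.
  have hn m : pi (x *+ m) = pi x *+ m.
    by elim: m => [|m IH]; rewrite ?mulr0n ?pi0 // !mulrS piD IH.
  by case: z => p; [rewrite -!pmulrn hn | rewrite !NegzE !mulrNz piN -!pmulrn hn].
have picob m (g0 : ('I_m -> I) -> A) c :
    pi (cobound g0 c) = cobound (fun d => pi (g0 d)) c.
  by rewrite /cobound pisum; apply: eq_bigr => j _; rewrite piMz.
have hB := hsg k.
have hf' : forall i : 'I_n.+2 -> I,
    sumsub (fun i q => exists x, sub_add (Ai k) (Ai i) x /\ pi x = q) i
      (cobound (fun c => pi (f c)) i).
  move=> i; have [x [hx e]] := hf i.
  exists (fun j => pi (x j)); split; last by rewrite -picob e pisum.
  move=> j; exists (x j); split => //; exists 0, (x j); split; first exact: sg0.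
  by rewrite add0r.
have [g' hg'] := H2 _ hf'.
have hs q : exists x, pi x == q by have [x hx] := hsurj q; exists x; apply/eqP.
pose g c := xchoose (hs (g' c)).
have pig c : pi (g c) = g' c by apply/eqP; apply: (xchooseP (hs (g' c))).
have cobg c : pi (cobound g c) = cobound g' c.
  by rewrite picob; congr cobound; apply: functional_extensionality => d.
have hex : forall i : 'I_n.+1 -> I, exists b, Ai k b /\ sumsub Ai i (f i - cobound g i - b).
  move=> i; have [y [hy e]] := hg' i.
  have [ba hba] : exists ba : 'I_n.+1 -> A * A, forall j,
      Ai k (ba j).1 /\ Ai (i j) (ba j).2 /\ pi ((ba j).1 + (ba j).2) = y j.
    apply: (@fchoice _ _ (fun j (c : A * A) => Ai k c.1 /\ Ai (i j) c.2 /\ pi (c.1 + c.2) = y j)) => j.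
    have [z [[b [a [hb [ha ->]]]] <-]] := hy j.
    by exists (b, a).
  pose Sa := \sum_(j < n.+1) (ba j).2; pose Sb := \sum_(j < n.+1) (ba j).1.
  exists (f i - cobound g i - Sa); split; last first.
    rewrite subKr; exists (fun j => (ba j).2); split => // j; exact: (hba j).2.1.
  have -> : f i - cobound g i - Sa = (f i - cobound g i - (Sb + Sa)) + Sb.
    by rewrite (addrC Sb) opprD addrA subrK.
  apply: sgD => //; last by apply: sgsum => // j; exact: (hba j).1.
  apply/hker; rewrite (hpi (f i - cobound g i)) (hpi (f i)) cobg e piD /Sa /Sb !pisum -big_split /=.
  apply/eqP; rewrite subr_eq0; apply/eqP; apply: eq_bigr => j _; by rewrite -piD (hba j).2.2.
pose h c := proj1_sig (constructive_indefinite_description _ (hex c)).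
have hh c : Ai k (h c) /\ sumsub Ai c (f c - cobound g c - h c).
  by rewrite /h; case: constructive_indefinite_description.
have hcoc : forall i : 'I_n.+2 -> I,
    sumsub (fun i => sub_cap (Ai k) (Ai i)) i (cobound h i).
  move=> i; apply: sumsub_distr => //.
    by apply: cobound_sg => // c; exact: (hh c).1.
  pose s c := f c - cobound g c - h c.
  have -> : h = fun c => (f c - cobound g c) - s c.
    by apply: functional_extensionality => c; rewrite /s subKr.
  rewrite cobound_sub cobound_sub cobound2 subr0.
  apply: sgB; first exact: sumsub_sg.
    exact: hf.
  by apply: cobound_sumsub => // c; exact: (hh c).2.
have [g2 hg2] := H1 _ hcoc.
exists (fun c => g c + g2 c) => i.
rewrite cobound_add.
have -> : f i - (cobound g i + cobound g2 i)
    = (f i - cobound g i - h i) + (h i - cobound g2 i).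
  by rewrite addrA subrK opprD addrA.
apply: sgD; first exact: sumsub_sg.
  exact: (hh i).2.
by apply: sumsub_mono (hg2 i) => i0 x [].
Qed.
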